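(* Let $K\subset\mathbb{R}^n$ be a nonempty compact convex set and let $\{H_m\}_{m\in\mathbb{N}}$ be a sequence of linear subspaces of $\mathbb{R}^n$ (not necessarily of the same dimension) such that the sequence \[K_m:=M_{H_m}\cdots M_{H_1}K\] converges in the Hausdorff metric to a compact convex set $L$. Then for every nonempty compact set $\tilde K\subset\mathbb{R}^n$ with $\mathrm{conv}(\tilde K)=K$, the sequence $\tilde K_m:=M_{H_m}\cdots M_{H_1}\tilde K$ also converges in the Hausdorff metric to $L$.
   Context: For a linear subspace $H$, $R_Hx=2(x|H)-x$ is the reflection with respect to $H$ ($x|H$ the orthogonal projection). The Minkowski symmetrization is $M_HC:=\frac12(C+R_HC)$, with $X+Y=\{x+y:x\in X,y\in Y\}$ and $tX=\{tx:x\in X\}$. $\mathrm{conv}$ denotes convex hull. *)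

(* Defs.v *)
From HB Require Import structures.
From mathcomp Require Import all_boot all_order all_algebra.
From mathcomp Require Import all_classical all_reals all_analysis.
Set Implicit Arguments. Unset Strict Implicit. Unset Printing Implicit Defensive.
Import Order.TTheory GRing.Theory Num.Theory.
Import numFieldNormedType.Exports.
Local Open Scope classical_set_scope.
Local Open Scope ring_scope.

Section Defs.
Variables (R : realType) (n : nat).
Notation vec := 'rV[R]_n.

Definition dotp (x y : vec) : R := (x *m y^T) 0 0.
Definition enorm (x : vec) : R := Num.sqrt (dotp x x).

(* A linear subspace H of R^n is represented as the row space of a matrix
   H : 'M[R]_n (every subspace arises this way). *)
Definition in_sub (H : 'M[R]_n) (x : vec) : Prop := (x <= H)%MS.

Definition oproj (H : 'M[R]_n) (x : vec) : vec :=
  xget 0 [set p | in_sub H p /\ forall h, in_sub H h -> dotp (x - p) h = 0].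

Definition refl (H : 'M[R]_n) (x : vec) : vec := 2%:R *: oproj H x - x.

Definition msym (H : 'M[R]_n) (C : set vec) : set vec :=
  [set z | exists x y, C x /\ C y /\ z = 2^-1 *: (x + refl H y)].

(* K_m = M_{H_m} ... M_{H_1} K, with the sequence H indexed from 0:
   iter_msym H K m = M_{H (m-1)} ... M_{H 0} K *)
Fixpoint iter_msym (H : nat -> 'M[R]_n) (K : set vec) (m : nat) : set vec :=
  match m with
  | 0 => K
  | m'.+1 => msym (H m') (iter_msym H K m')
  end.

Definition conv_hull (A : set vec) : set vec :=
  [set x | forall C, convex_set C -> A `<=` C -> C x].

Definition enbhd (B : set vec) (e : R) : set vec :=
  [set x | exists2 y, B y & enorm (x - y) <= e].

Definition hausdorff_dist (A B : set vec) : R :=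
  inf [set e : R | 0 <= e /\ A `<=` enbhd B e /\ B `<=` enbhd A e].

Definition hconv (K : nat -> set vec) (L : set vec) : Prop :=
  (fun m => hausdorff_dist (K m) L) @ \oo --> (0 : R).

End Defs.

(* Main.v *)
Require Import Defs.
From HB Require Import structures.
From mathcomp Require Import all_boot all_order all_algebra.
From mathcomp Require Import all_classical all_reals all_analysis.
From mathcomp Require Import ring lra.
Import Order.TTheory GRing.Theory Num.Theory.
Import numFieldNormedType.Exports.
Local Open Scope classical_set_scope.
Local Open Scope ring_scope.
Set Implicit Arguments. Unset Strict Implicit. Unset Printing Implicit Defensive.

Section Dot.
Variables (R : realType) (n : nat).
Notation vec := 'rV[R]_n.
Implicit Types x y z : vec.

Lemma dotpE x y : dotp x y = \sum_i x 0 i * y 0 i.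
Proof. by rewrite /dotp !mxE; apply: eq_bigr => i _; rewrite mxE. Qed.

Lemma dotpC x y : dotp x y = dotp y x.
Proof. by rewrite !dotpE; apply: eq_bigr => i _; rewrite mulrC. Qed.

Lemma dotpDl x y z : dotp (x + y) z = dotp x z + dotp y z.
Proof. by rewrite !dotpE -big_split; apply: eq_bigr => i _; rewrite mxE mulrDl. Qed.

Lemma dotpZl (a : R) x y : dotp (a *: x) y = a * dotp x y.
Proof. by rewrite !dotpE mulr_sumr; apply: eq_bigr => i _; rewrite mxE mulrA. Qed.

Lemma dotpNl x y : dotp (- x) y = - dotp x y.
Proof. by rewrite -scaleN1r dotpZl mulN1r. Qed.

Lemma dotpBl x y z : dotp (x - y) z = dotp x z - dotp y z.
Proof. by rewrite dotpDl dotpNl. Qed.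

Lemma dotpDr x y z : dotp x (y + z) = dotp x y + dotp x z.
Proof. by rewrite dotpC dotpDl !(dotpC x). Qed.
Lemma dotpZr (a : R) x y : dotp x (a *: y) = a * dotp x y.
Proof. by rewrite dotpC dotpZl dotpC. Qed.
Lemma dotpNr x y : dotp x (- y) = - dotp x y.
Proof. by rewrite dotpC dotpNl dotpC. Qed.
Lemma dotpBr x y z : dotp x (y - z) = dotp x y - dotp x z.
Proof. by rewrite dotpDr dotpNr. Qed.
Lemma dotp0l x : dotp 0 x = 0.
Proof. by rewrite -(scale0r (0:vec)) dotpZl mul0r. Qed.
Lemma dotp0r x : dotp x 0 = 0.
Proof. by rewrite dotpC dotp0l. Qed.

Lemma dotp_ge0 x : 0 <= dotp x x.
Proof. by rewrite dotpE sumr_ge0 // => i _; rewrite -expr2 sqr_ge0. Qed.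

Lemma dotp_eq0 x : dotp x x = 0 -> x = 0.
Proof.
rewrite dotpE => /eqP; rewrite psumr_eq0; last by move=> i _; rewrite -expr2 sqr_ge0.
move=> /allP H; apply/rowP => i; rewrite mxE.
have := H i (mem_index_enum i); rewrite implyTb mulf_eq0 orbb.
by move/eqP.
Qed.

Lemma dotp_le x y : 2 * dotp x y <= dotp x x + dotp y y.
Proof.
have := dotp_ge0 (x - y).
rewrite !dotpBl !dotpBr (dotpC y x); lra.
Qed.

Lemma enorm_ge0 x : 0 <= enorm x.
Proof. exact: sqrtr_ge0. Qed.

Lemma enorm_sq x : enorm x ^+ 2 = dotp x x.
Proof. by rewrite /enorm sqr_sqrtr // dotp_ge0. Qed.

Lemma enorm0P x : enorm x = 0 -> x = 0.
Proof. by move=> h; apply: dotp_eq0; rewrite -enorm_sq h expr0n. Qed.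

Lemma cauchy x y : dotp x y <= enorm x * enorm y.
Proof.
have [/enorm0P->|xn0] := eqVneq (enorm x) 0.
  by rewrite dotp0l mulr_ge0 ?enorm_ge0.
have [/enorm0P->|yn0] := eqVneq (enorm y) 0.
  by rewrite dotp0r mulr_ge0 ?enorm_ge0.
have := dotp_le ((enorm y) *: x) ((enorm x) *: y).
rewrite !dotpZl !dotpZr -!enorm_sq => h.
have hx : 0 < enorm x by rewrite lt_neqAle eq_sym xn0 enorm_ge0.
have hy : 0 < enorm y by rewrite lt_neqAle eq_sym yn0 enorm_ge0.
have hxy : 0 < enorm x * enorm y by rewrite mulr_gt0.
rewrite -(ler_pM2l hxy); nra.
Qed.

Lemma enormD x y : enorm (x + y) <= enorm x + enorm y.
Proof.
rewrite -(ler_pXn2r (_ : (0 < 2)%N)) ?nnegrE ?enorm_ge0 ?addr_ge0 ?enorm_ge0 //.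
rewrite enorm_sq dotpDl !dotpDr (dotpC y x) sqrrD -!enorm_sq.
have := cauchy x y; lra.
Qed.

Lemma enormN x : enorm (- x) = enorm x.
Proof. by rewrite /enorm dotpNl dotpNr opprK. Qed.

Lemma enorm_le_sq x (e : R) : 0 <= e -> dotp x x <= e ^+ 2 -> enorm x <= e.
Proof.
move=> e0 h; rewrite -(ler_pXn2r (_ : (0 < 2)%N)) ?nnegrE ?enorm_ge0 //.
by rewrite enorm_sq.
Qed.
End Dot.

Lemma subBB (V : zmodType) (a b c d : V) : a - b - (c - d) = (a - c) - (b - d).
Proof. by rewrite !opprB addrACA [RHS]addrACA (addrC (- b)). Qed.
Lemma subBB2 (V : zmodType) (x p q : V) : p - q = (x - q) - (x - p).
Proof. by rewrite subBB subrr sub0r opprB. Qed.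
Section Proj.
Variables (R : realType) (n : nat).
Notation vec := 'rV[R]_n.
Implicit Types x y z : vec.
Variable H : 'M[R]_n.

Lemma in_subB x y : in_sub H x -> in_sub H y -> in_sub H (x - y).
Proof. by move=> hx hy; apply: addmx_sub => //; rewrite -scaleN1r scalemx_sub. Qed.
Lemma in_subD x y : in_sub H x -> in_sub H y -> in_sub H (x + y).
Proof. exact: addmx_sub. Qed.
Lemma in_subZ (a : R) x : in_sub H x -> in_sub H (a *: x).
Proof. exact: scalemx_sub. Qed.

Definition PP x p := in_sub H p /\ forall h, in_sub H h -> dotp (x - p) h = 0.

Lemma oproj_ex x : exists p, PP x p.
Proof.
have [B Bf BH] : exists2 B : 'M[R]_(\rank H, n), row_free B & (B :=: H)%MS.
  by exists (row_base H); [exact: row_base_free | exact: eq_row_base].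
pose G := B *m B^T.
have Gu : G \in unitmx.
  rewrite -row_free_unit; apply: inj_row_free => v vG.
  have : dotp (v *m B) (v *m B) = 0.
    by rewrite /dotp trmx_mul mulmxA -(mulmxA v) -/G vG mul0mx mxE.
  move/dotp_eq0 => /eqP; rewrite mulmx_free_eq0 //.
  by move/eqP.
exists (x *m B^T *m invmx G *m B); split.
  by rewrite /in_sub -BH submxMl.
move=> h; rewrite /in_sub -BH => /submxP [u ->].
rewrite /dotp trmx_mul mulmxBl !mulmxA -(mulmxA _ B B^T) -/G mulmxKV //.
by rewrite subrr mxE.
Qed.

Lemma oprojP x : PP x (oproj H x).
Proof. exact: (xgetPex 0 (oproj_ex x)). Qed.

Lemma PP_uniq x p q : PP x p -> PP x q -> p = q.
Proof.
move=> [hp op] [hq oq]; apply/eqP; rewrite -subr_eq0; apply/eqP/dotp_eq0.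
rewrite {1}(subBB2 x p q) dotpBl oq ?op ?subrr //; exact: in_subB.
Qed.

Lemma oproj_sub x : in_sub H (oproj H x).
Proof. by case: (oprojP x). Qed.
Lemma oproj_orth x h : in_sub H h -> dotp (x - oproj H x) h = 0.
Proof. by case: (oprojP x) => _; apply. Qed.

Lemma oprojB x y : oproj H (x - y) = oproj H x - oproj H y.
Proof.
apply: PP_uniq; first exact: oprojP.
split; first by apply: in_subB; apply: oproj_sub.
move=> h hh.
rewrite subBB.
by rewrite dotpBl !oproj_orth // subrr.
Qed.

Lemma reflB x y : refl H (x - y) = refl H x - refl H y.
Proof. by rewrite /refl oprojB scalerBr subBB. Qed.

Lemma oproj_dot x y : dotp (oproj H x) y = dotp (oproj H x) (oproj H y).
Proof.
have := oproj_orth y (oproj_sub x); rewrite dotpC dotpBr => /eqP; rewrite subr_eq0.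
by move/eqP.
Qed.

Lemma refl_sym x y : dotp (refl H x) y = dotp x (refl H y).
Proof.
rewrite /refl dotpBl dotpBr dotpZl dotpZr (oproj_dot x y) (dotpC x (oproj H y)).
by rewrite (oproj_dot y x) (dotpC (oproj H y)).
Qed.

Lemma refl_iso x : dotp (refl H x) (refl H x) = dotp x x.
Proof.
rewrite /refl !dotpBl !dotpBr !dotpZl !dotpZr (dotpC x (oproj H x)) (oproj_dot x x).
set a := dotp (oproj H x) (oproj H x); set b := dotp x x; ring.
Qed.
End Proj.

Lemma convex_aux (F : realFieldType) (p A B Z : F) :
  0 <= p -> p <= 1 -> Z < A -> Z < B -> Z < p * A + (1 - p) * B.
Proof.
move=> l0 l1 ha hb.
have hB : 0 <= (1 - p) * (B - Z) by apply: mulr_ge0; lra.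
have [p0|p0] := eqVneq p 0.
  rewrite p0; lra.
have hC : 0 < p * (A - Z).
  by apply: mulr_gt0; [rewrite lt_neqAle eq_sym p0 | lra].
lra.
Qed.

Section Main.
Variables (R : realType) (n : nat).
Notation vec := 'rV[R]_n.
Implicit Types x y z : vec.

Lemma entry_le (x : vec) i : `|x 0 i| <= `|x|.
Proof.
have -> : `|x| = mx_norm x by [].
rewrite mx_normrE; exact: (le_trans _ (le_bigmax _ _ (0, i))).
Qed.

Lemma bounded_D (K : set vec) : compact K ->
  exists D : R, 0 <= D /\ forall y z, K y -> K z -> dotp (y - z) (y - z) <= D ^+ 2.
Proof.
move=> /compact_bounded [M0 [_ HM]].
have {HM} HM : forall x, K x -> `|x| <= `|M0| + 1.
  apply: HM; rewrite (le_lt_trans (real_ler_norm _)) ?ltrDl //.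
  exact: num_real.
set M := `|M0| + 1.
have M0' : 0 <= M by rewrite addr_ge0.
exists (2 * M * n%:R); split; first by rewrite !mulr_ge0.
move=> y z Ky Kz; rewrite dotpE.
have hi : forall i, (y - z) 0 i * (y - z) 0 i <= (2 * M) ^+ 2.
  move=> i; rewrite -expr2 -real_normK ?num_real //.
  rewrite lerXn2r ?nnegrE ?mulr_ge0 //.
  rewrite !mxE (le_trans (ler_normB _ _)) // mulr2n mulrDl mul1r lerD //.
    exact: le_trans (entry_le _ _) (HM _ Ky).
  exact: le_trans (entry_le _ _) (HM _ Kz).
apply: (le_trans (ler_sum _ (fun i _ => hi i))).
rewrite sumr_const card_ord [in X in _ <= X]exprMn.
rewrite -[_ *+ n]mulr_natr; apply: ler_wpM2l; first exact: sqr_ge0.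
rewrite -natrX ler_nat.
by rewrite expnS expn1; case: (n) => // k; rewrite leq_pmulr.
Qed.

Lemma halfspace (Kt K : set vec) z v : conv_hull Kt = K -> K z ->
  exists2 y, Kt y & dotp v (y - z) <= 0.
Proof.
move=> hK Kz; case: (pselect (exists2 y, Kt y & dotp v (y - z) <= 0)) => // hn.
pose C := [set u : vec | dotp v z < dotp v u].
have cC : convex_set C.
  move=> a b l; rewrite !inE /C /= => ha hb.
  have -> : conv l a b = l%:num *: (a : vec) + (1 - l%:num) *: (b : vec) by [].
  rewrite dotpDr !dotpZr.
  by apply: convex_aux.  
have : C z.
  rewrite -hK in Kz; apply: Kz => // y Kty.
  rewrite /C /= ltNge; apply/negP => h'; apply: hn; exists y => //.
  by rewrite dotpBr subr_le0.
by rewrite /C /= ltxx.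
Qed.

Lemma msym_mono (G : 'M[R]_n) (A B : set vec) : A `<=` B -> msym G A `<=` msym G B.
Proof. by move=> AB z [x [y [Ax [Ay ->]]]]; exists x, y; split; [apply: AB|split; [apply: AB|]]. Qed.

Lemma iter_mono (Hs : nat -> 'M[R]_n) (A B : set vec) : A `<=` B ->
  forall m, iter_msym Hs A m `<=` iter_msym Hs B m.
Proof. by move=> AB; elim=> [|m IH] //=; apply: msym_mono. Qed.

Lemma sub_conv (A : set vec) : A `<=` conv_hull A.
Proof. by move=> x Ax C _ hAC; apply: hAC. Qed.

Lemma addBB (V : zmodType) (a b c d : V) : (a + b) - (c + d) = (a - c) + (b - d).
Proof. by rewrite opprD addrACA. Qed.

Lemma expand1 (e1 r2 v : vec) :
  dotp (2^-1 *: (e1 + r2)) (2^-1 *: (e1 + r2)) + 2 * dotp v (2^-1 *: (e1 + r2)) =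
  2^-1 * (2^-1 * (dotp e1 e1 + 2 * dotp e1 r2 + dotp r2 r2)) + (dotp v e1 + dotp v r2).
Proof.
rewrite !dotpZl !dotpZr !dotpDl !dotpDr (dotpC r2 e1).
set a := dotp e1 e1; set b := dotp r2 r2; set c := dotp e1 r2.
set d := dotp v e1; set f := dotp v r2.
by field.
Qed.

Lemma expand2 (e1 v r2 : vec) : dotp (e1 + 2 *: v) r2 = dotp e1 r2 + 2 * dotp v r2.
Proof. by rewrite dotpDl dotpZl. Qed.

Lemma approx (Hs : nat -> 'M[R]_n) (Kt K : set vec) (D : R) :
  conv_hull Kt = K -> 0 <= D ->
  (forall y z, K y -> K z -> dotp (y - z) (y - z) <= D ^+ 2) ->
  forall m z, iter_msym Hs K m z -> forall v, exists2 w, iter_msym Hs Kt m w &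
    dotp (w - z) (w - z) + 2 * dotp v (w - z) <= (D * (3/4) ^+ m) ^+ 2.
Proof.
move=> hK D0 hD; elim=> [|m IH] z /=.
  move=> Kz v; have [y Kty hy] := halfspace v hK Kz.
  exists y => //.
  have Ky : K y by rewrite -hK; apply: sub_conv.
  have := hD _ _ Ky Kz; rewrite expr0 mulr1; lra.
move=> [x [y [Kx [Ky ->]]]] v.
have [w1 W1 h1] := IH x Kx (2 *: v).
have [w2 W2 h2] := IH y Ky (refl (Hs m) ((w1 - x) + 2 *: v)).
exists (2^-1 *: (w1 + refl (Hs m) w2)); first by exists w1, w2.
rewrite -scalerBr addBB -reflB.
move: h1 h2; move: (w1 - x) (w2 - y) => e1 e2 h1 h2.
rewrite refl_sym in h2.
rewrite expand1 refl_iso; rewrite expand2 in h2; rewrite dotpZl in h1.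
have e : D * (3/4) ^+ m.+1 = (D * (3/4) ^+ m) * (3/4) by rewrite exprSr; ring.
rewrite e.
move: h1 h2; move: (D * (3/4) ^+ m) (dotp e1 e1) (dotp e2 e2) (dotp e1 (refl (Hs m) e2))
  (dotp v e1) (dotp v (refl (Hs m) e2)) => t a b c d f h1 h2.
have -> : (t * (3/4)) ^+ 2 = t ^+ 2 * (9/16) by rewrite exprMn; congr (_ * _); rewrite expr2; field.
have t2 := sqr_ge0 t; move: h1 h2 t2; move: (t ^+ 2) => T; lra.
Qed.

Lemma enorm_tri (a b c : vec) : enorm (a - c) <= enorm (a - b) + enorm (b - c).
Proof. by have := enormD (a - b) (b - c); rewrite addrA subrK. Qed.

Lemma hd_ge0 (A L : set vec) : 0 <= hausdorff_dist A L.
Proof.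
rewrite /hausdorff_dist.
case: (pselect ([set e : R | 0 <= e /\ A `<=` enbhd L e /\ L `<=` enbhd A e] !=set0)) => h.
  by apply: lb_le_inf => // e [].
have -> : [set e : R | 0 <= e /\ A `<=` enbhd L e /\ L `<=` enbhd A e] = set0.
  by apply/seteqP; split => // e he; apply: h; exists e.
by rewrite inf0.
Qed.

Lemma hd_le (A B L : set vec) (eps : R) : 0 <= eps -> A `<=` B -> B `<=` enbhd A eps ->
  hausdorff_dist A L <= hausdorff_dist B L + eps.
Proof.
move=> eps0 AB BA.
rewrite /hausdorff_dist.
set SA := [set e : R | 0 <= e /\ A `<=` enbhd L e /\ L `<=` enbhd A e].
set SB := [set e : R | 0 <= e /\ B `<=` enbhd L e /\ L `<=` enbhd B e].
case: (pselect (SA !=set0)) => h; last first.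
  have -> : SA = set0.
    by apply/seteqP; split => // e he; apply: h; exists e.
  by rewrite inf0 addr_ge0 // (hd_ge0 B L).
have SAlb : has_lbound SA by exists 0 => e [].
have SBn : SB !=set0.
  case: h => e0 [e00 [AL LA]]; exists (e0 + eps); split; first by rewrite addr_ge0.
  split.
    move=> b Bb; have [a Aa hba] := BA b Bb; have [l Ll hal] := AL a Aa.
    exists l => //; apply: le_trans (enorm_tri b a l) _; lra.
  move=> l Ll; have [a Aa hla] := LA l Ll; exists a; first exact: AB.
  lra.
rewrite -lerBlDr; apply: lb_le_inf => // e [e0 [BL LB]].
rewrite lerBlDr; apply: (ge_inf SAlb); split; first by rewrite addr_ge0.
split.
  move=> a Aa; have [l Ll hal] := BL a (AB a Aa); exists l => //; lra.
move=> l Ll; have [b Bb hlb] := LB l Ll; have [a Aa hba] := BA b Bb.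
exists a => //; apply: le_trans (enorm_tri l b a) _; lra.
Qed.
End Main.

Unset Implicit Arguments.

Theorem corollary9 (R : realType) (n : nat) (K : set 'rV[R]_n)
  (H : nat -> 'M[R]_n) (L : set 'rV[R]_n) :
  K !=set0 -> compact K -> convex_set K ->
  compact L -> convex_set L ->
  hconv (iter_msym H K) L ->
  forall Kt : set 'rV[R]_n, Kt !=set0 -> compact Kt -> conv_hull Kt = K ->
    hconv (iter_msym H Kt) L.
Proof.
move=> _ cK _ _ _ hKL Kt _ _ hK.
have [D [D0 hD]] := bounded_D cK.
have KtK : Kt `<=` K by rewrite -hK; apply: sub_conv.
have hm : forall m, hausdorff_dist (iter_msym H Kt m) L <=
    hausdorff_dist (iter_msym H K m) L + D * (3/4) ^+ m.
  move=> m; apply: hd_le.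
  - by rewrite mulr_ge0 // exprn_ge0.
  - exact: iter_mono.
  - move=> z Kz; have [w Ww hw] := @approx _ _ H Kt K D hK D0 hD _ _ Kz 0.
    exists w => //; rewrite -enormN opprB; apply: enorm_le_sq.
      by rewrite mulr_ge0 // exprn_ge0.
    by move: hw; rewrite dotp0l mulr0 addr0.
rewrite /hconv.
apply: (@squeeze_cvgr _ _ _ _ (fun=> 0) (fun m => hausdorff_dist (iter_msym H K m) L + D * (3/4) ^+ m)).
- by near=> m; rewrite hd_ge0 hm.
- exact: cvg_cst.
- rewrite -[0 : R]addr0; apply: cvgD; first exact: hKL.
  have := @cvg_geometric R D (3/4); rewrite /geometric /=; apply.
  by rewrite ger0_norm //; lra.
Unshelve. all: end_near.
Qed.
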